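(* Let $I=(i_1,\ldots,i_m)$ and $J=(j_1,\ldots,j_m)$ with $i_k,j_k\in\{1,\ldots,n_k\}$. The basis tensor $\mathcal{E}^{IJ}(1)$ is $\mathbb{R}$-Hermitian decomposable if and only if $I-J$ has at most one nonzero entry. Moreover, if $I=J$ then $\operatorname{hrank}_{\mathbb{R}}\mathcal{E}^{IJ}(1)=1$, and if $I$ and $J$ differ in exactly one entry then $\operatorname{hrank}_{\mathbb{R}}\mathcal{E}^{IJ}(1)=2$.
   Context: For vectors $v_i$, $[v_1,\ldots,v_m]_{\otimes h}:=v_1\otimes\cdots\otimes v_m\otimes\overline{v_1}\otimes\cdots\otimes\overline{v_m}$. $\mathcal{E}^{IJ}(1)\in\mathbb{R}^{n_1\times\cdots\times n_m\times n_1\times\cdots\times n_m}$ is the tensor whose entries at positions $(i_1,\ldots,i_m,j_1,\ldots,j_m)$ and $(j_1,\ldots,j_m,i_1,\ldots,i_m)$ equal $1$ and all other entries are $0$. A real tensor $\mathcal{H}$ with $\mathcal{H}_{i_1\ldots i_mj_1\ldots j_m}=\mathcal{H}_{j_1\ldots j_mi_1\ldots i_m}$ is $\mathbb{R}$-Hermitian decomposable if $\mathcal{H}=\sum_{i=1}^r\lambda_i[u_i^1,\ldots,u_i^m]_{\otimes h}$ with $\lambda_i\in\mathbb{R}$ and $u_i^j\in\mathbb{R}^{n_j}$; the smallest such $r$ is $\operatorname{hrank}_{\mathbb{R}}(\mathcal{H})$. *)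

(* Defs.v *)
From HB Require Import structures.
From mathcomp Require Import all_boot all_order all_algebra.
Set Implicit Arguments. Unset Strict Implicit. Unset Printing Implicit Defensive.
Import Order.TTheory GRing.Theory Num.Theory.
Local Open Scope ring_scope.

(* A multi-index (i_1,...,i_m) with i_k in {0,...,n_k - 1}. *)
Definition Idx (m : nat) (n : 'I_m -> nat) := {dffun forall k : 'I_m, 'I_(n k)}.

(* A real tensor in R^{n_1 x ... x n_m x n_1 x ... x n_m}, entry H I J. *)
Definition tensor (R : Type) (m : nat) (n : 'I_m -> nat) := Idx n -> Idx n -> R.

(* [v_1,...,v_m]_{\otimes h} over the reals (conjugation is the identity):
   entry at (I,J) is prod_k v_k(i_k) * prod_k v_k(j_k). *)
Definition htensor (R : numDomainType) (m : nat) (n : 'I_m -> nat)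
  (v : forall k : 'I_m, 'I_(n k) -> R) : tensor R n :=
  fun I J => (\prod_(k < m) v k (I k)) * (\prod_(k < m) v k (J k)).

Definition hsym (R : Type) (m : nat) (n : 'I_m -> nat) (H : tensor R n) : Prop :=
  forall I J, H I J = H J I.

Definition hdecomp_len (R : numDomainType) (m : nat) (n : 'I_m -> nat)
  (H : tensor R n) (r : nat) : Prop :=
  exists (lambda : 'I_r -> R) (u : 'I_r -> forall k : 'I_m, 'I_(n k) -> R),
    forall I J, H I J = \sum_(i < r) lambda i * htensor (u i) I J.

Definition hdecomposable (R : numDomainType) (m : nat) (n : 'I_m -> nat)
  (H : tensor R n) : Prop :=
  hsym H /\ exists r, hdecomp_len H r.

Definition hrank_eq (R : numDomainType) (m : nat) (n : 'I_m -> nat)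
  (H : tensor R n) (r : nat) : Prop :=
  hdecomposable H /\ hdecomp_len H r /\ (forall r', hdecomp_len H r' -> (r <= r')%N).

Definition basisE (R : numDomainType) (m : nat) (n : 'I_m -> nat)
  (I J : Idx n) : tensor R n :=
  fun K L => if ((K == I) && (L == J)) || ((K == J) && (L == I)) then 1 else 0.

(* Number of positions where I and J differ (nonzero entries of I - J). *)
Definition ndiff (m : nat) (n : 'I_m -> nat) (I J : Idx n) : nat :=
  #|[set k : 'I_m | I k != J k]|.

(* Main.v *)
Require Import Defs.
From HB Require Import structures.
From mathcomp Require Import all_boot all_order all_algebra.
From mathcomp Require Import ring.
Import Order.TTheory GRing.Theory Num.Theory.
Local Open Scope ring_scope.
Set Implicit Arguments. Unset Strict Implicit.

Section S.
Variables (R : realFieldType) (m : nat) (n : 'I_m -> nat).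

Lemma prod_ind (K I : Idx n) :
  \prod_(k < m) ((K k == I k)%:R : R) = (K == I)%:R.
Proof.
have [->|ne] := eqVneq K I.
  by rewrite big1 // => k _; rewrite eqxx.
have [k hk] : exists k, K k != I k.
  apply/existsP; apply: contraR ne; rewrite negb_exists => /forallP h.
  by apply/eqP/ffunP => k; apply/eqP; have := h k; rewrite negbK.
by rewrite (bigD1 k) //= (negbTE hk) mul0r.
Qed.

Lemma htensor_swap (u : forall k : 'I_m, 'I_(n k) -> R) (I J K L : Idx n) :
  (forall k, (K k = I k /\ L k = J k) \/ (K k = J k /\ L k = I k)) ->
  htensor u I J = htensor u K L.
Proof.
move=> H; rewrite /htensor -!big_split /=; apply: eq_bigr => k _.
by case: (H k) => [[e1 e2]|[e1 e2]]; rewrite e1 e2 // mulrC.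
Qed.

Lemma basisE_sym (I J : Idx n) : hsym (basisE R I J).
Proof. by rewrite /hsym /basisE => K L; case: (K == I); case: (L == J); case: (K == J); case: (L == I). Qed.

Lemma rank1_case (I : Idx n) : hrank_eq (basisE R I I) 1.
Proof.
have D : hdecomp_len (basisE R I I) 1.
  exists (fun _ => 1), (fun _ k x => (x == I k)%:R) => K L.
  rewrite big_ord1 mul1r /htensor !prod_ind /basisE orbb.
  by case: (K == I); case: (L == I); rewrite ?mulr1 ?mulr0 ?mul0r.
split; first by split; [apply: basisE_sym | exists 1%N].
split=> // -[|r'] // [lam [u /(_ I I)]].
by rewrite big_ord0 /basisE !eqxx /= => /eqP; rewrite oner_eq0.
Qed.

Lemma rank2_case (I J : Idx n) : ndiff I J = 1%N -> hrank_eq (basisE R I J) 2.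
Proof.
move=> /eqP /cards1P [p Hp].
have eqk : forall k, k != p -> I k = J k.
  move=> k kp; apply/eqP; apply: contraNT kp => h.
  have : k \in [set k | I k != J k] by rewrite inE.
  by rewrite Hp inE.
have neIJ : I != J.
  apply/eqP => e; have : p \in [set k | I k != J k] by rewrite Hp set11.
  by rewrite inE e eqxx.
pose s (i : 'I_2) : R := if i == ord0 then 1 else -1.
pose u (i : 'I_2) (k : 'I_m) (x : 'I_(n k)) : R :=
  if k == p then (x == I k)%:R + s i * (x == J k)%:R else (x == I k)%:R.
have Hu : forall i (K : Idx n), \prod_(k < m) u i k (K k) =
    (K == I)%:R + s i * (K == J)%:R.
  move=> i K; rewrite -!prod_ind (bigD1 p) //= [X in _ = X + _](bigD1 p) //=
     [X in _ = _ + _ * X](bigD1 p) //= /u eqxx.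
  have -> : \prod_(k < m | k != p) (if k == p then (K k == I k)%:R + s i * (K k == J k)%:R
        else ((K k == I k)%:R : R)) = \prod_(k < m | k != p) ((K k == I k)%:R : R).
    by apply: eq_bigr => k /negbTE ->.
  have -> : \prod_(k < m | k != p) ((K k == J k)%:R : R) =
      \prod_(k < m | k != p) ((K k == I k)%:R : R).
    by apply: eq_bigr => k kp; rewrite eqk.
  ring.
have D : hdecomp_len (basisE R I J) 2.
  exists (fun i => if i == ord0 then 2^-1 else - 2^-1), u => K L.
  rewrite big_ord_recr big_ord1 /= /htensor !Hu /s /= /basisE.
  have h2 : (2 : R) != 0 by rewrite pnatr_eq0.
  have nb : forall X : Idx n, ~~ ((X == I) && (X == J)).
    move=> X; apply/andP => -[/eqP a /eqP b]; move: neIJ; by rewrite -a b eqxx.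
  move: (nb K) (nb L).
  case: (K == I); case: (K == J); case: (L == I); case: (L == J) => //= _ _; field; done.
split; first by split; [apply: basisE_sym | exists 2%N].
split=> // -[|[|r']] // [lam [u' H]].
  by move: (H I J); rewrite big_ord0 /basisE !eqxx /= => /eqP; rewrite oner_eq0.
move: (H I J) (H I I); rewrite !big_ord1 /basisE !eqxx (negbTE neIJ) /=.
rewrite /htensor => h1 /esym /eqP; rewrite !mulf_eq0 orbb => /orP [] /eqP h0;
  by move: h1; rewrite h0 ?mul0r ?mulr0 => /eqP; rewrite oner_eq0.
Qed.

End S.

Theorem corollary3p4 (R : realFieldType) (m : nat) (n : 'I_m -> nat) (I J : Idx n) :
  (hdecomposable (basisE R I J) <-> (ndiff I J <= 1)%N) /\
  (I = J -> hrank_eq (basisE R I J) 1) /\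
  (ndiff I J = 1%N -> hrank_eq (basisE R I J) 2).
Proof.
split; last by split; [move=> ->; apply: rank1_case | apply: rank2_case].
split.
  move=> [_ [r [lam [u H]]]]; rewrite leqNgt; apply/negP => /card_gt1P [p [q [hp hq pq]]].
  rewrite !inE in hp hq.
  pose K : Idx n := finfun (fun k => if k == p then J k else I k).
  pose L : Idx n := finfun (fun k => if k == p then I k else J k).
  have HKL : basisE R I J I J = basisE R I J K L.
    rewrite !H; apply: eq_bigr => i _; congr (_ * _); apply: htensor_swap => k.
    rewrite /K /L !ffunE; case: (k == p); [right|left]; by [].
  move: HKL; rewrite /basisE !eqxx /=.
  have -> : (K == I) = false.
    apply/negbTE/eqP => /ffunP /(_ p); rewrite ffunE eqxx => e.
    by rewrite e eqxx in hp.
  have -> : (K == J) = false.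
    apply/negbTE/eqP => /ffunP /(_ q); rewrite ffunE eq_sym (negbTE pq) => e.
    by rewrite e eqxx in hq.
  by move/eqP; rewrite oner_eq0.
rewrite leq_eqVlt ltnS leqn0 => /orP [/eqP h|/eqP h]; last first.
  suff -> : I = J by case: (rank1_case R J).
  apply/ffunP => k; apply/eqP; move/eqP: h; rewrite cards_eq0 => /eqP /setP /(_ k).
  by rewrite !inE => /negbFE.
by case: (rank2_case R h).
Qed.
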